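(* Assume $\mathfrak{c} = 2^{<\mathfrak{c}}$, where $\mathfrak{c}=|\mathbb{R}|$ and $2^{<\mathfrak{c}} = \sup\{2^\lambda : \lambda<\mathfrak{c}\ \text{a cardinal}\}$. Then there is a family $\{ f_\nu : \nu < 2^{\mathfrak{c}} \}$ of two-point selections on $\mathbb{R}$ such that $\mathcal{B}_{f_\mu}(\mathbb{R}) \neq \mathcal{B}_{f_\nu}(\mathbb{R})$ for all distinct $\mu, \nu < 2^{\mathfrak{c}}$.
   Context: For a set $X$, $[X]^2$ is the set of two-element subsets of $X$. A two-point selection on $X$ is a function $f:[X]^2\to X$ with $f(F)\in F$ for all $F\in[X]^2$. For a two-point selection $f$ on $X$ and distinct $r,s\in X$, write $r<_f s$ if $f(\{r,s\})=r$. Put $(\leftarrow,r)_f=\{x\in X: x<_f r\}$ and $(r,\rightarrow)_f=\{x\in X: r<_f x\}$. The topology $\tau_f$ on $X$ is the topology generated (as a subbase) by all sets $(\leftarrow,r)_f$ and $(r,\rightarrow)_f$, $r\in X$. For $X=\mathbb{R}$, $\mathcal{B}_f(\mathbb{R})$ denotes the Borel $\sigma$-algebra of $(\mathbb{R},\tau_f)$, i.e. the $\sigma$-algebra generated by $\tau_f$. *)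

(* Defs.v *)
From HB Require Import structures.
From mathcomp Require Import all_boot all_order.
From mathcomp Require Import classical_sets cardinality measurable_structure.
From Stdlib Require Import Reals.
Set Implicit Arguments.
Unset Strict Implicit.
Unset Printing Implicit Defensive.
Local Open Scope classical_set_scope.

Notation RR := Rdefinitions.R.

Definition two_subset {X : Type} (F : set X) : Prop :=
  exists r s : X, r <> s /\ F = [set r; s].

(* We represent it as a function on all subsets, only constrained on [X]^2
   (its values elsewhere are irrelevant to every notion below). *)
Definition two_point_selection {X : Type} (f : set X -> X) : Prop :=
  forall F : set X, two_subset F -> F (f F).

Definition sel_lt {X : Type} (f : set X -> X) (r s : X) : Prop :=
  r <> s /\ f [set r; s] = r.

Definition sel_left_ray {X : Type} (f : set X -> X) (r : X) : set X :=
  [set x | sel_lt f x r].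
Definition sel_right_ray {X : Type} (f : set X -> X) (r : X) : set X :=
  [set x | sel_lt f r x].

Definition sel_subbase {X : Type} (f : set X -> X) : set (set X) :=
  [set U | exists r, U = sel_left_ray f r \/ U = sel_right_ray f r].

Definition generated_topology {X : Type} (S : set (set X)) : set (set X) :=
  [set U | forall x, U x ->
     exists s : seq (set X), (forall V, V \in s -> S V) /\
        (forall V, V \in s -> V x) /\
        (forall y, (forall V, V \in s -> V y) -> U y)].

Definition tau_sel {X : Type} (f : set X -> X) : set (set X) :=
  generated_topology (sel_subbase f).

Definition borel_sel {X : Type} (f : set X -> X) : set (set X) :=
  smallest (sigma_algebra setT) (tau_sel f).

(* Main.v *)
Require Import Defs.
From HB Require Import structures.
From mathcomp Require Import all_boot all_order all_algebra.
From mathcomp Require Import classical_sets boolp cardinality measurable_structure.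
From mathcomp Require Import reals Rstruct Rstruct_topology measure lebesgue_measure.
From mathcomp Require Import constructive_ereal interval_inference.
From mathcomp Require Import zify.
From Stdlib Require Import Reals Lra.
Import Order.TTheory GRing.Theory Num.Theory.
Local Open Scope classical_set_scope.

Definition alpha (x : RR) : set nat :=
  [set n | exists q : rat, unpickle n = Some q /\ Rlt (ratr q) x].

Lemma rat_between (x y : RR) : Rlt x y -> exists q : rat, Rlt x (ratr q) /\ Rlt (ratr q) y.
Proof.
move=> /RltP xy; have [q] := rat_in_itvoo xy.
rewrite in_itv /= => /andP[/RltP h1 /RltP h2]; by exists q.
Qed.

Lemma alpha_inj : injective alpha.
Proof.
have key : forall x y, Rlt x y -> alpha x <> alpha y.
  move=> x y /rat_between [q [h1 h2]] e.
  have : alpha y (pickle q) by exists q; rewrite pickleK.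
  rewrite -e => -[q' [e' h']]; rewrite pickleK in e'; case: e' => <- in h'.
  lra.
move=> x y e; case: (Rtotal_order x y) => [h|[//|h]].
  by case: (key _ _ h).
by case: (key _ _ h).
Qed.

Definition enc (a b : set nat) (i : bool) : set nat :=
  [set n | (exists k, n = (4 * k)%N /\ a k) \/ (exists k, n = (4 * k + 1)%N /\ b k) \/ (n = 2%N /\ i)].

Lemma enc_inj a b i a' b' i' : enc a b i = enc a' b' i' -> [/\ a = a', b = b' & i = i'].
Proof.
move=> e.
have E : forall n, enc a b i n <-> enc a' b' i' n by move=> n; rewrite e.
split.
- apply/funext => k; apply/propext; split => h.
  + have := proj1 (E (4 * k)%N) (or_introl (ex_intro _ k (conj erefl h))).
    case=> [[k' [ek hk]]|[[k' [ek hk]]|[ek _]]]; try lia.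
    by have -> : k = k' by lia.
  + have := proj2 (E (4 * k)%N) (or_introl (ex_intro _ k (conj erefl h))).
    case=> [[k' [ek hk]]|[[k' [ek hk]]|[ek _]]]; try lia.
    by have -> : k = k' by lia.
- apply/funext => k; apply/propext; split => h.
  + have := proj1 (E (4 * k + 1)%N) (or_intror (or_introl (ex_intro _ k (conj erefl h)))).
    case=> [[k' [ek hk]]|[[k' [ek hk]]|[ek _]]]; try lia.
    by have -> : k = k' by lia.
  + have := proj2 (E (4 * k + 1)%N) (or_intror (or_introl (ex_intro _ k (conj erefl h)))).
    case=> [[k' [ek hk]]|[[k' [ek hk]]|[ek _]]]; try lia.
    by have -> : k = k' by lia.
- clear e; case: i E => E; case: i' E => E //.
  + have := proj1 (E 2%N) (or_intror (or_intror (conj erefl erefl))).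
    case=> [[k' [ek hk]]|[[k' [ek hk]]|[ek hk]]]; try lia; by [].
  + have := proj2 (E 2%N) (or_intror (or_intror (conj erefl erefl))).
    case=> [[k' [ek hk]]|[[k' [ek hk]]|[ek hk]]]; try lia; by [].
Qed.

Lemma RR_uncountable : ~ countable [set: RR].
Proof.
move=> /(@countable_lebesgue_measure0 RR) h.
have := @le_measure _ _ _ (@lebesgue_measure RR) `[0%R, 1%R]%classic setT.
rewrite /= h lebesgue_measure_itv /= lte_fin ltr01 oppr0 adde0 lee_fin ler10.
move=> H; suff: false by []; apply: H => //; rewrite inE //; exact: measurable_itv.
Qed.

Local Open Scope card_scope.

Definition Hyp := (forall A : set RR, (A #<= [set: RR]) -> ~ ([set: RR] #<= A) ->
     [set B : set RR | B `<=` A] #<= [set: RR]).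

Lemma beta_exists : Hyp -> exists beta : set nat -> RR, injective beta.
Proof.
move=> H.
have cA : countable (range INR) by exact: card_image_le.
have nA : ~ ([set: RR] #<= range INR).
  by move=> h; apply: RR_uncountable; exact: card_le_trans h cA.
have /pcard_injP [iota hi] := H _ (card_leT _) nA.
exists (fun s => iota (INR @` s)) => s t e.
have e' : INR @` s = INR @` t.
  apply: hi => //; rewrite inE /= => _ [n _ <-]; by exists n.
apply/funext => n; apply/propext; split => h.
- have : (INR @` t) (INR n) by rewrite -e'; exists n.
  by case=> m hm /INR_eq em; rewrite -em.
- have : (INR @` s) (INR n) by rewrite e'; exists n.
  by case=> m hm /INR_eq em; rewrite -em.
Qed.

Lemma Phi_exists : Hyp -> exists Phi : RR * (RR * bool) -> RR, injective Phi.
Proof.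
move=> /beta_exists [beta hb].
exists (fun t => beta (enc (alpha t.1) (alpha t.2.1) t.2.2)).
move=> [p [u i]] [p2 [u2 i2]] /hb /enc_inj [/alpha_inj /= e1 /alpha_inj /= e2 /= e3]; by rewrite e1 e2 e3.
Qed.

Definition SO {A} (lt : A -> A -> Prop) :=
  [/\ (forall x, ~ lt x x), (forall x y z, lt x y -> lt y z -> lt x z) &
      (forall x y, x <> y -> lt x y \/ lt y x)].

Definition lexD {A B} (lt1 : A -> A -> Prop) (lt2 : A -> B -> B -> Prop) (x y : A * B) :=
  lt1 x.1 y.1 \/ (x.1 = y.1 /\ lt2 x.1 x.2 y.2).

Lemma SO_lexD {A B} (lt1 : A -> A -> Prop) (lt2 : A -> B -> B -> Prop) :
  SO lt1 -> (forall a, SO (lt2 a)) -> SO (lexD lt1 lt2).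
Proof.
move=> [i1 t1 c1] h2; split.
- move=> [a b] [/i1 //|[_ /=]]; by case: (h2 a) => i2 _ _; apply: i2.
- move=> [a b] [a' b'] [a'' b''] /=; rewrite /lexD /=.
  case=> [h|[e h]]; case=> [h'|[e' h']].
  + by left; apply: t1 h h'.
  + by left; rewrite -e'.
  + by left; rewrite e.
  + right; split; first by rewrite e.
    by case: (h2 a) => _ t2 _; apply: t2 h _; rewrite e.
- move=> [a b] [a' b'] ne; rewrite /lexD /=.
  have [e|ne'] := pselect (a = a').
  + subst a'; have nb : b <> b' by move=> e; apply: ne; rewrite e.
    by case: (h2 a) => _ _ c2; case: (c2 _ _ nb) => h; [left|right]; right.
  + by case: (c1 _ _ ne') => h; [left|right]; left.
Qed.

Lemma SO_comap {A B} (lt : B -> B -> Prop) (g : A -> B) :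
  SO lt -> injective g -> SO (fun a b => lt (g a) (g b)).
Proof.
move=> [i t c] hg; split.
- by move=> x; apply: i.
- by move=> x y z; apply: t.
- by move=> x y ne; apply: c => /hg.
Qed.

Definition bl (i j : bool) := i = false /\ j = true.

Lemma SO_bl : SO bl.
Proof.
split.
- by move=> x [-> ].
- by move=> x y z [-> ->] [].
- by move=> [] [] ne; try (by case: ne); [right|left].
Qed.

Lemma SO_Rlt : SO Rlt.
Proof.
split.
- exact: Rlt_irrefl.
- exact: Rlt_trans.
- by move=> x y ne; case: (Rtotal_order x y) => [h|[h|h]]; [left| |right].
Qed.

Definition optlt {T} (lt : T -> T -> Prop) (a b : option T) :=
  match a, b with
  | None, Some _ => True
  | Some x, Some y => lt x y
  | _, _ => False
  end.

Lemma SO_optlt {T} (lt : T -> T -> Prop) : SO lt -> SO (optlt lt).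
Proof.
move=> [i t c]; split.
- by move=> [x|] //=; apply: i.
- by move=> [x|] [y|] [z|] //=; apply: t.
- move=> [x|] [y|] ne /=.
  + by apply: c => e; apply: ne; rewrite e.
  + by right.
  + by left.
  + by case: ne.
Qed.

Definition inner (nu : set RR) (p : RR) : RR * bool -> RR * bool -> Prop :=
  if pselect (nu p) then (fun a b => lexD bl (fun _ => Rlt) (a.2, a.1) (b.2, b.1))
  else lexD Rlt (fun _ => bl).

Lemma SO_inner nu p : SO (inner nu p).
Proof.
rewrite /inner; case: pselect => hp.
- apply: (@SO_comap _ _ _ (fun a : RR * bool => (a.2, a.1))).
    by apply: SO_lexD => [|_]; [exact: SO_bl|exact: SO_Rlt].
  by move=> [a b] [a' b'] [-> ->].
- by apply: SO_lexD => [|_]; [exact: SO_Rlt|exact: SO_bl].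
Qed.

Definition lt3 (nu : set RR) := lexD Rlt (inner nu).

Lemma SO_lt3 nu : SO (lt3 nu).
Proof. apply: SO_lexD; [exact: SO_Rlt|exact: SO_inner]. Qed.


Definition dec (Phi : RR * (RR * bool) -> RR) (x : RR) : option (RR * (RR * bool)) :=
  match pselect (exists t, Phi t = x) with
  | left h => Some (projT1 (cid h))
  | right _ => None
  end.

Lemma decPhi Phi (hP : injective Phi) t : dec Phi (Phi t) = Some t.
Proof.
rewrite /dec; case: pselect => [h|[]]; last by exists t.
by case: cid => s /= /hP ->.
Qed.

Lemma dec_some Phi x t : dec Phi x = Some t -> Phi t = x.
Proof.
rewrite /dec; case: pselect => [h|//].
by case: cid => s /= hs [<-].
Qed.

Definition before Phi nu (x y : RR) :=
  lexD (optlt (lt3 nu)) (fun _ => Rlt) (dec Phi x, x) (dec Phi y, y).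

Lemma SO_before Phi nu : SO (before Phi nu).
Proof.
apply: (@SO_comap _ _ _ (fun x => (dec Phi x, x))).
  apply: SO_lexD => [|_]; [exact/SO_optlt/SO_lt3|exact: SO_Rlt].
by move=> x y [_ ->].
Qed.

Lemma before_img Phi (hP : injective Phi) nu s t :
  before Phi nu (Phi s) (Phi t) <-> lt3 nu s t.
Proof.
rewrite /before /lexD /= !decPhi //=; split => [[//|[[->] h]]|]; last by left.
by case: (Rlt_irrefl _ h).
Qed.

Lemma before_junk Phi nu x t : dec Phi x = None -> before Phi nu x (Phi t).
Proof.
move=> hx; rewrite /before /lexD /= hx; left.
by rewrite /dec; case: pselect => // -[]; exists t.
Qed.

Lemma before_junk' Phi (hP : injective Phi) nu x t : dec Phi x = None -> ~ before Phi nu (Phi t) x.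
Proof. by move=> hx; rewrite /before /lexD /= hx decPhi //= => -[//|[]]. Qed.

Definition sel Phi nu (F : set RR) : RR :=
  match pselect (exists x, F x /\ forall z, F z -> z <> x -> before Phi nu x z) with
  | left h => projT1 (cid h)
  | right _ => 0%R
  end.

Lemma sel_spec Phi nu (F : set RR) r s : r <> s -> F = [set r; s] ->
  F (sel Phi nu F) /\ forall z, F z -> z <> sel Phi nu F -> before Phi nu (sel Phi nu F) z.
Proof.
move=> ne ->; rewrite /sel; case: pselect => [h|[]]; first by case: cid.
have [_ _ c] := SO_before Phi nu.
case: (c _ _ ne) => h.
- exists r; split; first by left.
  by move=> z [->|->] // nz.
- exists s; split; first by right.
  by move=> z [->|->] // nz.
Qed.

Lemma sel_ltE Phi nu r s : sel_lt (sel Phi nu) r s <-> before Phi nu r s.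
Proof.
have [i1 t1 c1] := SO_before Phi nu.
split.
- move=> [ne e]; have [_ h] := sel_spec Phi nu _ _ _ ne erefl.
  rewrite e in h; apply: h; [by right|by move=> es; apply: ne].
- move=> h; have ne : r <> s by move=> e; rewrite e in h; exact: i1 h.
  split => //; have [h1 h2] := sel_spec Phi nu _ _ _ ne erefl.
  case: h1 => // es.
  have := h2 r (or_introl erefl); rewrite /= in es; rewrite es => /(_ ne) h'.
  by case: (i1 r); apply: t1 h h'.
Qed.

Lemma sel_two Phi nu : two_point_selection (sel Phi nu).
Proof. by move=> F [r [s [ne e]]]; have [] := sel_spec Phi nu _ _ _ ne e. Qed.

Lemma ray_left_open {X} (f : set X -> X) r : tau_sel f (sel_left_ray f r).
Proof.
move=> x hx; exists [:: sel_left_ray f r]; split; [|split].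
- by move=> V; rewrite inE => /eqP ->; exists r; left.
- by move=> V; rewrite inE => /eqP ->.
- by move=> y /(_ (sel_left_ray f r)); apply; rewrite inE.
Qed.

Lemma open2 {X} (f : set X -> X) V1 V2 : sel_subbase f V1 -> sel_subbase f V2 ->
  tau_sel f (V1 `&` V2).
Proof.
move=> h1 h2 x [x1 x2]; exists [:: V1; V2]; split; [|split].
- by move=> V; rewrite !inE => /orP[/eqP ->|/eqP ->].
- by move=> V; rewrite !inE => /orP[/eqP ->|/eqP ->].
- move=> z hz; split; apply: hz; by rewrite !inE eqxx ?orbT.
Qed.

Definition Sy (Phi : RR * (RR * bool) -> RR) (y : RR) : set RR := [set x | exists u, x = Phi (y, (u, false))].

Lemma partA Phi (hP : injective Phi) (nu : set RR) y : nu y ->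
  borel_sel (sel Phi nu) (Sy Phi y).
Proof.
move=> ny.
pose O n := sel_left_ray (sel Phi nu) (Phi (y, (INR n, false))) `&`
            sel_right_ray (sel Phi nu) (Phi (y, (- INR n, false)))%R.
have -> : Sy Phi y = \bigcup_n O n.
  apply/funext => x; apply/propext; split.
  - move=> [u ->].
    have [n hn] := INR_unbounded (Rmax u (- u)).
    have h1 := Rmax_l u (- u); have h2 := Rmax_r u (- u).
    exists n => //; split; rewrite /sel_left_ray /sel_right_ray /= sel_ltE before_img //;
      rewrite /lt3 /lexD /inner /=; right; (split; first by []);
      (case: pselect => [hy|hy]; last by case: hy); right; split => //=; lra.
  - move=> [n _ [hl hr]].
    move: hl hr; rewrite /sel_left_ray /sel_right_ray /= !sel_ltE.
    case ex: (dec Phi x) => [[p [u i]]|].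
    + rewrite -(dec_some _ _ _ ex) !before_img // /lt3 /lexD /=.
      case=> [hp|[ep h]]; case=> [hp'|[ep' h']]; try lra.
      subst p; move: h h'; rewrite /inner; case: pselect => [hy|hy]; last by case: hy.
      rewrite /lexD /= => -[[_ //]|[ei _]] _.
      by exists u; rewrite ei.
    + by move=> _ /(before_junk' _ hP nu _ (y, (- INR n, false))%R ex).
apply: sigma_algebra_bigcup => n; apply: sub_sigma_algebra.
apply: open2; [by exists (Phi (y, (INR n, false))); left
              |by exists (Phi (y, (- INR n, false))%R); right].
Qed.

Lemma countable_sub {T} (A B : set T) : A `<=` B -> countable B -> countable A.
Proof. by move=> s h; apply: sub_countable (subset_card_le s) h. Qed.

Lemma countableU2 {T} (A B : set T) : countable A -> countable B -> countable (A `|` B).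
Proof.
move=> hA hB.
apply: (@countable_sub _ _ (\bigcup_(n in [set: nat]) (if n is 0%N then A else B))).
  by move=> x [h|h]; [exists 0%N|exists 1%N].
by apply: bigcup_countable => // -[|n] _.
Qed.

Lemma lt3_same nu y a b : ~ nu y -> lt3 nu (y, a) (y, b) <-> lexD Rlt (fun _ => bl) a b.
Proof.
move=> ny; rewrite /lt3 /lexD /inner /=; case: pselect => [h|h']; first by case: ny.
split; [case=> [h|[_ h]] //; lra|by right].
Qed.

Lemma rayL0 Phi (hP : injective Phi) nu y u V : ~ nu y ->
  sel_subbase (sel Phi nu) V -> V (Phi (y, (u, false))) ->
  exists L, Rlt L u /\ forall v, Rlt L v -> Rlt v u -> V (Phi (y, (v, true))).
Proof.
move=> ny [r [->|->]]; rewrite /sel_left_ray /sel_right_ray /= !sel_ltE => h.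
- exists (u - 1)%R; split; first lra.
  move=> v _ vu; rewrite sel_ltE; have [_ t _] := SO_before Phi nu; apply: (t _ _ _ _ h).
  by rewrite before_img // lt3_same //; left.
- case ex: (dec Phi r) => [[p [w k]]|].
  + move: h; rewrite -(dec_some _ _ _ ex) before_img //.
    have [ep|nep] := pselect (p = y).
    * subst p; rewrite lt3_same // /lexD /= => -[wu|[_ [_ //]]].
      exists w; split => // v wv _; rewrite sel_ltE before_img // lt3_same //; by left.
    * case=> /= [py|[e _]]; last by case: nep; rewrite e.
      exists (u - 1)%R; split; first lra.
      by move=> v _ _; rewrite sel_ltE before_img //; left.
  + exists (u - 1)%R; split; first lra.
    by move=> v _ _; rewrite sel_ltE; apply: before_junk.
Qed.

Lemma rayL1 Phi (hP : injective Phi) nu y u V : ~ nu y ->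
  sel_subbase (sel Phi nu) V -> V (Phi (y, (u, true))) ->
  exists H, Rlt u H /\ forall v, Rlt u v -> Rlt v H -> V (Phi (y, (v, false))).
Proof.
move=> ny [r [->|->]]; rewrite /sel_left_ray /sel_right_ray /= !sel_ltE => h.
- case ex: (dec Phi r) => [[p [w k]]|].
  + move: h; rewrite -(dec_some _ _ _ ex) before_img //.
    have [ep|nep] := pselect (p = y).
    * subst p; rewrite lt3_same // /lexD /= => -[uw|[_ [//]]].
      exists w; split => // v _ vw; rewrite sel_ltE before_img // lt3_same //; by left.
    * case=> /= [py|[e _]]; last by case: nep; rewrite e.
      exists (u + 1)%R; split; first lra.
      by move=> v _ _; rewrite sel_ltE before_img //; left.
  + by case: (before_junk' _ hP nu _ _ ex h).
- exists (u + 1)%R; split; first lra.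
  move=> v uv _; rewrite sel_ltE; have [_ t _] := SO_before Phi nu; apply: (t _ _ _ h).
  by rewrite before_img // lt3_same //; left.
Qed.

Lemma openL0 Phi (hP : injective Phi) nu y u U : ~ nu y ->
  tau_sel (sel Phi nu) U -> U (Phi (y, (u, false))) ->
  exists L, Rlt L u /\ forall v, Rlt L v -> Rlt v u -> U (Phi (y, (v, true))).
Proof.
move=> ny hU /hU [s [hs1 [hs2 hs3]]].
suff [L [Lu hL]] : exists L, Rlt L u /\ forall v, Rlt L v -> Rlt v u ->
    forall V, V \in s -> V (Phi (y, (v, true))).
  by exists L; split => // v h1 h2; apply: hs3; apply: hL.
elim: s hs1 hs2 {hs3} => [|W s IH] hs1 hs2.
  by exists (u - 1)%R; split; [lra|move=> v _ _ V; rewrite in_nil].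
have [L1 [L1u h1]] : exists L, Rlt L u /\ forall v, Rlt L v -> Rlt v u -> W (Phi (y, (v, true))).
  by apply: (rayL0 _ hP nu y u W ny); [apply: hs1|apply: hs2]; rewrite inE eqxx.
have [L2 [L2u h2]] := IH (fun V hV => hs1 V (ltac:(by rewrite inE hV orbT)))
  (fun V hV => hs2 V (ltac:(by rewrite inE hV orbT))).
exists (Rmax L1 L2); split; first by apply: Rmax_lub_lt.
move=> v hv vu V; rewrite inE => /orP [/eqP ->|hV].
- apply: h1 => //; apply: Rle_lt_trans hv; exact: Rmax_l.
- apply: h2 => //; apply: Rle_lt_trans hv; exact: Rmax_r.
Qed.

Lemma openL1 Phi (hP : injective Phi) nu y u U : ~ nu y ->
  tau_sel (sel Phi nu) U -> U (Phi (y, (u, true))) ->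
  exists H, Rlt u H /\ forall v, Rlt u v -> Rlt v H -> U (Phi (y, (v, false))).
Proof.
move=> ny hU /hU [s [hs1 [hs2 hs3]]].
suff [H [uH hH]] : exists H, Rlt u H /\ forall v, Rlt u v -> Rlt v H ->
    forall V, V \in s -> V (Phi (y, (v, false))).
  by exists H; split => // v h1 h2; apply: hs3; apply: hH.
elim: s hs1 hs2 {hs3} => [|W s IH] hs1 hs2.
  by exists (u + 1)%R; split; [lra|move=> v _ _ V; rewrite in_nil].
have [H1 [uH1 h1]] : exists H, Rlt u H /\ forall v, Rlt u v -> Rlt v H -> W (Phi (y, (v, false))).
  by apply: (rayL1 _ hP nu y u W ny); [apply: hs1|apply: hs2]; rewrite inE eqxx.
have [H2 [uH2 h2]] := IH (fun V hV => hs1 V (ltac:(by rewrite inE hV orbT)))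
  (fun V hV => hs2 V (ltac:(by rewrite inE hV orbT))).
exists (Rmin H1 H2); split; first by apply: Rmin_glb_lt.
move=> v uv hv V; rewrite inE => /orP [/eqP ->|hV].
- apply: h1 => //; apply: Rlt_le_trans hv _; exact: Rmin_l.
- apply: h2 => //; apply: Rlt_le_trans hv _; exact: Rmin_r.
Qed.

Definition bad (Phi : RR * (RR * bool) -> RR) y (A : set RR) : set RR :=
  [set u | ~ (A (Phi (y, (u, false))) <-> A (Phi (y, (u, true))))].

Lemma open_bad Phi (hP : injective Phi) nu y U : ~ nu y ->
  tau_sel (sel Phi nu) U -> countable (bad Phi y U).
Proof.
move=> ny hU.
pose b0 := [set u | U (Phi (y, (u, false))) /\ ~ U (Phi (y, (u, true)))].
pose b1 := [set u | U (Phi (y, (u, true))) /\ ~ U (Phi (y, (u, false)))].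
apply: (@countable_sub _ _ (b0 `|` b1)).
  move=> u; rewrite /bad /b0 /b1 /= => h.
  have [h0|h0] := pselect (U (Phi (y, (u, false))));
  have [h1|h1] := pselect (U (Phi (y, (u, true)))).
  - by case: h.
  - by left.
  - by right.
  - by case: h; split.
apply: countableU2.
- pose P u q := Rlt (ratr q) u /\ forall v, Rlt (ratr q) v -> Rlt v u -> U (Phi (y, (v, true))).
  have hP0 : forall u, b0 u -> exists q, P u q.
    move=> u [hu _]; have [L [Lu hL]] := openL0 _ hP nu y u U ny hU hu.
    have [q [q1 q2]] := rat_between _ _ Lu; exists q; split => // v qv vu.
    apply: hL => //; exact: Rlt_trans qv.
  pose g u := match pselect (exists q, P u q) with left h => projT1 (cid h) | right _ => @GRing.zero rat end.
  have gP : forall u, b0 u -> P u (g u).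
    by move=> u /hP0 h; rewrite /g; case: pselect => [h'|//]; case: cid.
  apply/countable_injP; exists (fun u => pickle (g u)).
  move=> u u' /set_mem hu /set_mem hu' /(pcan_inj pickleK) e.
  have [q1 h1] := gP _ hu; have [q1' h1'] := gP _ hu'.
  case: (Rtotal_order u u') => [lt|[//|lt]].
  + case: hu => _ []; apply: h1' => //; rewrite -e //.
  + case: hu' => _ []; apply: h1 => //; rewrite e //.
- pose P u q := Rlt u (ratr q) /\ forall v, Rlt u v -> Rlt v (ratr q) -> U (Phi (y, (v, false))).
  have hP0 : forall u, b1 u -> exists q, P u q.
    move=> u [hu _]; have [H [uH hH]] := openL1 _ hP nu y u U ny hU hu.
    have [q [q1 q2]] := rat_between _ _ uH; exists q; split => // v uv vq.
    apply: hH => //; exact: Rlt_trans q2.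
  pose g u := match pselect (exists q, P u q) with left h => projT1 (cid h) | right _ => @GRing.zero rat end.
  have gP : forall u, b1 u -> P u (g u).
    by move=> u /hP0 h; rewrite /g; case: pselect => [h'|//]; case: cid.
  apply/countable_injP; exists (fun u => pickle (g u)).
  move=> u u' /set_mem hu /set_mem hu' /(pcan_inj pickleK) e.
  have [q1 h1] := gP _ hu; have [q1' h1'] := gP _ hu'.
  case: (Rtotal_order u u') => [lt|[//|lt]].
  + case: hu' => _ []; apply: h1 => //; rewrite e //.
  + case: hu => _ []; apply: h1' => //; rewrite -e //.
Qed.

Lemma sigma_bad Phi y : sigma_algebra setT [set A | countable (bad Phi y A)].
Proof.
split.
- by apply: (@countable_sub _ _ set0) => // u h; apply: h; split.
- move=> A hA; apply: (@countable_sub _ _ (bad Phi y A) _ hA) => u h h'; apply: h.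
  rewrite /setD /=; split => -[_ na]; split => // a; apply: na; by apply h'.
- move=> A hA; apply: (@countable_sub _ _ (\bigcup_(n in [set: nat]) bad Phi y (A n))).
    move=> u h; apply: contrapT => hn; apply: h.
    have hA' : forall n, (A n (Phi (y, (u, false))) <-> A n (Phi (y, (u, true)))).
      by move=> n; apply: contrapT => hb; apply: hn; exists n.
    split => -[n _ hx]; exists n => //; by apply hA'.
  by apply: bigcup_countable => // n _; apply: hA.
Qed.

Lemma partB Phi (hP : injective Phi) (nu : set RR) y : ~ nu y ->
  ~ borel_sel (sel Phi nu) (Sy Phi y).
Proof.
move=> ny hb.
have sub : borel_sel (sel Phi nu) `<=` [set A | countable (bad Phi y A)].
  apply: smallest_sub; first exact: sigma_bad.
  by move=> U hU; apply: (open_bad _ hP nu y U ny hU).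
have := sub _ hb; rewrite /=.
move=> hc; apply: RR_uncountable; apply: (@countable_sub _ _ _ _ hc) => u _.
rewrite /bad /Sy /= => -[h _].
have [u' /hP [_ _ //]] := h (ex_intro _ u erefl).
Qed.

Theorem theorem3p6 :
  (forall A : set RR, (A #<= [set: RR]) -> ~ ([set: RR] #<= A) ->
     [set B : set RR | B `<=` A] #<= [set: RR]) ->
  exists f : set RR -> (set RR -> RR),
    (forall nu : set RR, two_point_selection (f nu)) /\
    (forall mu nu : set RR, mu <> nu -> borel_sel (f mu) <> borel_sel (f nu)).
Proof.
move=> H; have [Phi hP] := Phi_exists H.
exists (sel Phi); split; first exact: sel_two.
move=> mu nu ne e.
have [y hy] : exists y, ~ (mu y <-> nu y).
  apply: contrapT => hn; apply: ne; apply/funext => y; apply/propext.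
  by apply: contrapT => h; apply: hn; exists y.
have [hm|hm] := pselect (mu y).
- have nn : ~ nu y by move=> hn; apply: hy; split.
  by apply: (partB _ hP nu y nn); rewrite -e; apply: partA.
- have nn : nu y by apply: contrapT => hn; apply: hy; split.
  by apply: (partB _ hP mu y hm); rewrite e; apply: partA.
Qed.
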